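(* Let $\alpha>0$, $h>0$, let $(Y_k)_{k\ge0}$ be i.i.d. random variables with $\mathbb{E}[Y_1]=0$, $\mathbb{E}[Y_1^2]=1$, let $B^h_t=\sqrt{h}\sum_{k=0}^{\lfloor t/h\rfloor}Y_k$, and let $X^h_{0-}$ be a real-valued random variable independent of $(Y_k)$ whose law is atomless. Define, for increasing $\ell$, $X^h_t[\ell]=X^h_{0-}+B^h_t-\alpha\ell_{h\lfloor t/h\rfloor}$, $\tau^h[\ell]=\inf\{t\ge0:X^h_t[\ell]\le0\}$ and $\Gamma_h[\ell]_t=\mathbb{P}(\tau^h[\ell]\le t)$. Let $\underline{\Lambda}^h$ be the minimal solution of the Donsker problem with initial condition $X^h_{0-}$ (see context). Then $\underline{\Lambda}^h=\alpha\lim_{k\to\infty}\Gamma_h^{(k)}[0]$, where $\Gamma_h^{(k)}$ is the $k$-fold iterate of $\Gamma_h$, $0$ denotes the zero function, and the limit is understood in $M$.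
   Context: Donsker problem: a deterministic function $\Lambda^h$ is a solution if, with $X^h_t=X^h_{0-}+B^h_t-\Lambda^h_t$ and $\tau^h=\inf\{t\ge0:X^h_t\le0\}$, one has $\Lambda^h_t=\alpha\,\mathbb{P}(\tau^h\le t)$ for all $t\ge0$; a solution $\underline{\Lambda}^h$ is minimal if $\underline{\Lambda}^h\le\Lambda^h$ for every solution $\Lambda^h$. $M$ is the set of càdlàg increasing functions $\ell:\overline{\mathbb{R}}\to[0,1]$ with $\ell_{0-}=0$, $\ell_\infty=1$, with $\ell^n\to\ell$ iff $\ell^n_t\to\ell_t$ at all $t\in[0,\infty]$ where $\ell$ is continuous. *)

(* Defs.v *)
From HB Require Import structures.
From mathcomp Require Import all_boot all_order all_algebra.
From mathcomp Require Import all_classical all_reals all_analysis.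
Set Implicit Arguments. Unset Strict Implicit. Unset Printing Implicit Defensive.
Import Order.TTheory GRing.Theory Num.Theory.
Import numFieldNormedType.Exports.
Local Open Scope classical_set_scope.
Local Open Scope ring_scope.

Section Donsker.
Context {d : measure_display} {T : measurableType d} {R : realType}.
Variable P : probability T R.

(* (Y_k) mutually independent: product rule for every finite initial
   segment of indices (taking B k = setT gives every finite subfamily). *)
Definition mutually_independent_seq (Y : nat -> T -> R) : Prop :=
  forall (n : nat) (B : nat -> set R), (forall k, measurable (B k)) ->
    P (\bigcap_(k in [set k | (k < n)%N]) (Y k @^-1` B k))
    = (\prod_(k < n) P (Y k @^-1` B k))%E.

Definition identically_distributed_seq (Y : nat -> T -> R) : Prop :=
  forall (k : nat) (B : set R), measurable B ->
    P (Y k @^-1` B) = P (Y 0%N @^-1` B).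

(* X independent of sigma(Y_k, k >= 0): product rule against the
   generating pi-system of cylinder events. *)
Definition independent_of_seq (X : T -> R) (Y : nat -> T -> R) : Prop :=
  forall (A : set R) (n : nat) (B : nat -> set R), measurable A ->
    (forall k, measurable (B k)) ->
    P (X @^-1` A `&` \bigcap_(k in [set k | (k < n)%N]) (Y k @^-1` B k))
    = (P (X @^-1` A) * P (\bigcap_(k in [set k | (k < n)%N]) (Y k @^-1` B k)))%E.

Definition atomless_law (X : T -> R) : Prop :=
  forall x : R, P (X @^-1` [set x]) = 0%E.

Definition Bh (h : R) (Y : nat -> T -> R) (t : R) (w : T) : R :=
  Num.sqrt h * \sum_(0 <= k < (Num.truncn (t / h)).+1) Y k w.

Definition hit_time (X : R -> T -> R) (w : T) : \bar R :=
  ereal_inf [set t%:E | t in [set t | 0 <= t /\ X t w <= 0]].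

Definition hit_cdf (X : R -> T -> R) (t : R) : R :=
  fine (P [set w | (hit_time X w <= t%:E)%E]).

Definition donsker_solution (alpha h : R) (Y : nat -> T -> R) (X0 : T -> R)
    (Lam : R -> R) : Prop :=
  forall t, 0 <= t ->
    Lam t = alpha * hit_cdf (fun s w => X0 w + Bh h Y s w - Lam s) t.

Definition donsker_minimal_solution (alpha h : R) (Y : nat -> T -> R)
    (X0 : T -> R) (Lam : R -> R) : Prop :=
  donsker_solution alpha h Y X0 Lam /\
  forall Lam', donsker_solution alpha h Y X0 Lam' ->
    forall t, 0 <= t -> Lam t <= Lam' t.

Definition Gamma_h (alpha h : R) (Y : nat -> T -> R) (X0 : T -> R)
    (l : R -> R) : R -> R :=
  hit_cdf (fun s w => X0 w + Bh h Y s w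
                      - alpha * l (h * (Num.floor (s / h))%:~R)).

End Donsker.

(* An element l of M is a function on [0,oo) extended by l_{0-} = 0 on
   negative times (and l_oo = 1); its continuity points in [0,oo) are the
   continuity points of this extension. *)
Definition extM {R : realType} (l : R -> R) (t : R) : R :=
  if t < 0 then 0 else l t.

(* Main.v *)
Require Import Defs.
From HB Require Import structures.
From mathcomp Require Import all_boot all_order all_algebra.
From mathcomp Require Import all_classical all_reals all_analysis.
From mathcomp Require Import lra ring zify.
From Stdlib Require Import Lia.
Import Order.TTheory GRing.Theory Num.Theory.
Import numFieldNormedType.Exports.
Local Open Scope classical_set_scope.
Local Open Scope ring_scope.
Set Implicit Arguments. Unset Strict Implicit.

Section Modulus.
Context d (T : measurableType d) (R : realType) (P : probability T R)
  (X : {RV P >-> R}).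

Lemma PX_fin (A : set R) : measurable A -> P (X @^-1` A) \is a fin_num.
Proof. by move=> mA; apply: fin_num_measure; exact: measurable_funPTI. Qed.

Lemma tail_lo (eta : R) : 0 < eta ->
  exists lo, (P (X @^-1` `]-oo, lo]) < eta%:E)%E.
Proof.
move=> eta0.
have h1 : (fine \o cdf X) x @[x --> -oo] --> (0:R).
  by apply: fine_cvg; exact: cvg_cdfNy0.
have /filter_ex [r Hr] := cvgr_lt (FF:=proper_ninfty_nbhs) 0 h1 eta eta0.
exists r; rewrite -[X in (X < _)%E]fineK ?lte_fin//.
exact: PX_fin.
Qed.

Lemma tail_hi (eta : R) : 0 < eta ->
  exists hi, (P (X @^-1` `]hi, +oo[) < eta%:E)%E.
Proof.
move=> eta0.
have h1 : (fine \o ccdf X) x @[x --> +oo] --> (0:R).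
  by apply: fine_cvg; exact: cvg_ccdfy0.
have /filter_ex [r Hr] := cvgr_lt (FF:=proper_pinfty_nbhs) 0 h1 eta eta0.
exists r; rewrite -[X in (X < _)%E]fineK ?lte_fin//.
exact: PX_fin.
Qed.


Lemma PX_le (A B : set R) : measurable A -> measurable B -> A `<=` B ->
  (P (X @^-1` A) <= P (X @^-1` B))%E.
Proof.
move=> mA mB AB; apply: le_measure; rewrite ?inE; try exact: measurable_funPTI.
by move=> t /=; apply: AB.
Qed.

Definition wq (q : nat) : R := q.+1%:R^-1.

Lemma wq_gt0 q : 0 < wq q.
Proof. by rewrite /wq invr_gt0 ltr0Sn. Qed.

Lemma wq_le1 q : wq q <= 1.
Proof. by rewrite /wq invf_le1 ?ltr0Sn// ler1n. Qed.

Lemma wq_mono {q q'} : (q <= q')%N -> wq q' <= wq q.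
Proof. by move=> qq; rewrite /wq lef_pV2 ?posrE ?ltr0Sn// ler_nat ltnS. Qed.

Lemma wq_small {e : R} : 0 < e -> wq (Num.truncn (e^-1)) < e.
Proof.
move=> e0; rewrite /wq invf_plt ?posrE ?ltr0Sn//.
exact: truncnS_gt.
Qed.

Hypothesis atom : forall x, P (X @^-1` [set x]) = 0%E.

Lemma mod_small (eta : R) : 0 < eta ->
  exists2 w, 0 < w & forall x, (P (X @^-1` `]x, (x + w)%R]) <= eta%:E)%E.
Proof.
move=> eta0.
case: (pselect (exists2 w : R, 0 < w & forall x : R,
  (P (X @^-1` `]x, (x + w)%R]) <= eta%:E)%E)) => // Hn; exfalso.
pose H q := [set x | (eta%:E < P (X @^-1` `]x, (x + wq q)%R]))%E].
have Hq : forall q, H q !=set0.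
  move=> q; apply: contrapT => Hx; apply: Hn; exists (wq q); first exact: wq_gt0.
  move=> x; rewrite leNgt; apply/negP => h; apply: Hx; by exists x.
have [lo Hlo] := @tail_lo eta eta0.
have [hi Hhi] := @tail_hi eta eta0.
have hlb : forall q x, H q x -> lo - 1 < x.
  move=> q x Hx; rewrite ltNge; apply/negP => hx.
  have : (P (X @^-1` `]x, (x + wq q)%R]) <= P (X @^-1` `]-oo, lo]))%E.
    apply: PX_le => // y /=; rewrite !in_itv /= => /andP[_ hy].
    by have := wq_le1 q; lra.
  by move=> h; have := lt_trans (le_lt_trans h Hlo) Hx; rewrite ltxx.
have hub : forall q x, H q x -> x < hi.
  move=> q x Hx; rewrite ltNge; apply/negP => hx.
  have : (P (X @^-1` `]x, (x + wq q)%R]) <= P (X @^-1` `]hi, +oo[))%E.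
    apply: PX_le => // y /=; rewrite !in_itv /= => /andP[hy _].
    by rewrite andbT; lra.
  by move=> h; have := lt_trans (le_lt_trans h Hhi) Hx; rewrite ltxx.
have hinf : forall q, has_inf (H q).
  by move=> q; split; [exact: Hq | exists (lo - 1) => y /(hlb q)/ltW].
pose L q := inf (H q).
have HH : forall q q', (q <= q')%N -> H q' `<=` H q.
  move=> q q' qq y; rewrite /H /= => hy; apply: (lt_le_trans hy).
  apply: PX_le => // z /=; rewrite !in_itv /= => /andP[-> hz] /=.
  by have := wq_mono qq; lra.
have Lmono : forall q q', (q <= q')%N -> L q <= L q'.
  move=> q q' qq; apply: lb_le_inf; first exact: Hq.
  move=> y /(HH _ _ qq) hy; have := ge_inf (hinf q).2 hy. rewrite /L. done.
have Lub : forall q, L q <= hi.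
  move=> q; have [y hy] := Hq q.
  by apply: le_trans (ltW (hub _ _ hy)); exact: (ge_inf (hinf q).2 hy).
have hsup : has_sup (range L).
  split; first by exists (L 0%N), 0%N.
  by exists hi => y [q _ <-]; exact: Lub.
pose xs := sup (range L).
have key : forall q, (eta%:E <= P (X @^-1` `](xs - wq q)%R, (xs + wq q)%R]))%E.
  move=> q; set r := wq q.
  have r0 : 0 < r := wq_gt0 q.
  have [e [q0 _ <-] Hq0] := sup_adherent (divr_gt0 r0 (ltr0Sn R 1)) hsup.
  pose q1 := maxn q0 (2 * q + 1).
  have hw1 : wq q1 <= r / 2%:R.
    have -> : r / 2%:R = wq (2 * q + 1).
      rewrite /r /wq -invfM; congr (_^-1).
      by rewrite -natrM; congr (_%:R); lia.
    by apply: wq_mono; rewrite /q1 leq_maxr.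
  have hL1 : L q0 <= L q1 by apply: Lmono; rewrite /q1 leq_maxl.
  have hLs : L q1 <= xs by apply: (ub_le_sup hsup.2); exists q1.
  have [x Hx Hxlt] := inf_adherent (divr_gt0 r0 (ltr0Sn R 1)) (hinf q1).
  have hLx : L q1 <= x by exact: (ge_inf (hinf q1).2 Hx).
  apply: ltW; apply: (lt_le_trans Hx); apply: PX_le => // y /=.
  rewrite !in_itv /= => /andP[h1 h2].
  rewrite /L in hL1 hLs hLx Hxlt.
  have w1 := wq_gt0 q1.
  rewrite -/xs /L in Hq0; apply/andP; split; lra.
pose F q := X @^-1` `]xs - wq q, xs + wq q].
have mF : forall q, measurable (F q) by move=> q; exact: measurable_funPTI.
have capF : \bigcap_q F q = X @^-1` [set xs].
  apply/seteqP; split => y /=.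
    move=> Hy; apply/eqP; rewrite -subr_eq0; apply: contraT => hne.
    have e0 : 0 < `|X y - xs| by rewrite normr_gt0.
    have := Hy (Num.truncn (`|X y - xs|^-1)) I; rewrite /F /= in_itv /=.
    have := wq_small e0.
    move: (wq (Num.truncn `|X y - xs|^-1)) => w hw /andP[h1 h2].
    by rewrite ltr_normr in hw; case/orP: hw => hw; lra.
  move=> hy q _; rewrite /F /= in_itv /= hy.
  by have := wq_gt0 q; move=> ?; apply/andP; split; lra.
have cv : (P \o F) q @[q --> \oo] --> P (\bigcap_q F q).
  apply: nonincreasing_cvg_mu => //.
  - by rewrite (le_lt_trans (probability_le1 _ _)) ?ltry.
  - exact: bigcap_measurable.
  - move=> m n mn; apply/subsetPset => y; rewrite /F /= !in_itv /=.
    by have := wq_mono mn; move=> hh /andP[h1 h2]; apply/andP; split; lra.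
rewrite capF atom in cv.
have cv' : (fine \o (P \o F)) q @[q --> \oo] --> (0:R) by apply: fine_cvg.
have /filter_ex [q Hq'] := cvgr_lt (FF:=eventually_filter) 0 cv' eta eta0.
move: Hq'; rewrite /= -lte_fin fineK; last exact: fin_num_measure.
by rewrite ltNge key.
Qed.

End Modulus.

Lemma mpre d (T : measurableType d) (R : realType) (f : T -> R) (A : set R) :
  measurable_fun setT f -> measurable A -> measurable (f @^-1` A).
Proof. by move=> mf mA; rewrite -[f @^-1` A]setTI; exact: mf. Qed.

Definition cellR (R : realType) (δ : R) (m : int) : set R :=
  `[m%:~R * δ, (m%:~R + 1) * δ[.

Definition pinv (j : nat) : option int := pickle_inv j.

Lemma pinvK (m : int) : pinv (pickle m) = Some m.
Proof. exact: pickleK_inv. Qed.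

Lemma pinvP j m : pinv j = Some m -> pickle m = j.
Proof. rewrite /pinv => E; have := @pickle_invK int j. rewrite E. by []. Qed.

Definition cell (R : realType) (δ : R) (j : nat) : set R :=
  if pinv j is Some m then cellR δ m else set0.

Lemma cellR_floor (R : realType) (δ y : R) (m : int) : 0 < δ ->
  cellR δ m y <-> Num.floor (y / δ) = m.
Proof.
move=> d0; rewrite /cellR /= in_itv /=; split.
  move=> /andP[h1 h2]; apply: floor_def; rewrite intrD /=.
  by rewrite ler_pdivlMr // ltr_pdivrMr // h1.
move=> <-; have := floor_itv (y / δ); rewrite intrD.
by rewrite ler_pdivlMr // ltr_pdivrMr.
Qed.

Lemma cellP (R : realType) (δ y : R) : 0 < δ ->
  cell δ (pickle (Num.floor (y / δ))) y.
Proof. by move=> d0; rewrite /cell pinvK; apply/cellR_floor. Qed.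

Lemma cellP' (R : realType) (δ y : R) m : 0 < δ -> m = Num.floor (y / δ) ->
  cell δ (pickle m) y.
Proof. by move=> d0 hm; rewrite /cell pinvK; apply/cellR_floor. Qed.

Lemma mcell (R : realType) (δ : R) j : measurable (cell δ j).
Proof. by rewrite /cell; case: pinv => // m; exact: measurable_itv. Qed.

Lemma cell_inj (R : realType) (δ y : R) i j : 0 < δ ->
  cell δ i y -> cell δ j y -> i = j.
Proof.
move=> d0; rewrite /cell.

case E1 : (pinv i) => [mi|] //; case E2 : (pinv j) => [mj|] //.
move=> /(cellR_floor _ _ d0) h1 /(cellR_floor _ _ d0) h2.
rewrite -(pinvP E1) -(pinvP E2).
by rewrite -h1 -h2.
Qed.

Lemma arith_step (R : realType) (a δ x v z y m : R) :
  a * (m * δ) <= a * y -> a * y <= a * ((m + 1) * δ) ->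
  x < z + a * y -> z + a * y <= x + v ->
  (x - a * (m + 1) * δ < z) && (z <= x - a * (m + 1) * δ + (v + a * δ)).
Proof.
move=> h1 h2 h3 h4.
have e1 : a * ((m + 1) * δ) = a * (m + 1) * δ by ring.
have e2 : a * (m * δ) = a * (m + 1) * δ - a * δ by ring.
rewrite e1 in h2; rewrite e2 in h1.
apply/andP; split; lra.
Qed.

Section Atomless.
Context d (T : measurableType d) (R : realType) (P : probability T R)
  (X : {RV P >-> R}) (Y : nat -> {RV P >-> R}).
Hypothesis indep : independent_of_seq P X (fun k => (Y k : T -> R)).

Definition Ssum n (w : T) : R := \sum_(0 <= k < n) Y k w.

Lemma mSsum n : measurable_fun setT (Ssum n).
Proof. by rewrite /Ssum; apply: measurable_sum => k; exact: measurable_funPT. Qed.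

Lemma mZ (a : R) n : measurable_fun setT (fun w => X w + a * Ssum n w).
Proof.
apply: measurable_realfun.measurable_funD; first exact: measurable_funPT.
apply: measurable_realfun.measurable_funM; first exact: measurable_cst.
exact: mSsum.
Qed.

Definition Cyl n0 (B : nat -> set R) :=
  \bigcap_(k in [set k | (k < n0)%N]) ((Y k : T -> R) @^-1` B k).

Lemma mCyl n0 B : (forall k, measurable (B k)) -> measurable (Cyl n0 B).
Proof.
move=> mB; case: n0 => [|n0].
  rewrite /Cyl (_ : [set k | (k < 0)%N] = set0) ?bigcap_set0 //.
  by apply/seteqP; split => k.
apply: bigcap_measurable; first by exists 0%N.
by move=> k _; exact: measurable_funPTI.
Qed.

Definition ev (a : R) n (x v : R) :=
  (fun w => X w + a * Ssum n w) @^-1` `]x, x + v].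

Lemma mev a n x v : measurable (ev a n x v).
Proof. by apply: mpre; [exact: mZ | exact: measurable_itv]. Qed.

Lemma ind_bound (a δ eta : R) n0 : 0 <= a -> 0 < δ -> 0 <= eta ->
  forall n, (n <= n0)%N -> forall v x (B : nat -> set R),
  (forall k, measurable (B k)) -> (forall k, (k < n)%N -> B k = setT) ->
  (forall y, (P (X @^-1` `]y, (y + (v + n%:R * a * δ))%R]) <= eta%:E)%E) ->
  (P (ev a n x v `&` Cyl n0 B) <= eta%:E * P (Cyl n0 B))%E.
Proof.
move=> a0 d0 e0; elim=> [|n IH] hn v x B mB hB hW.
  have -> : ev a 0 x v = X @^-1` `]x, x + v].
    by apply/seteqP; split=> w; rewrite /ev /Ssum /= big_geq // mulr0 addr0.
  rewrite /Cyl (indep n0 (measurable_itv _) mB).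
  apply: lee_wpmul2r => //.
  by have := hW x; rewrite mul0r mul0r addr0.
pose Bj j k := if k == n then cell δ j else B k.
have mBj : forall j k, measurable (Bj j k).
  by move=> j k; rewrite /Bj; case: eqP => _; [exact: mcell | exact: mB].
pose G j := Cyl n0 (Bj j).
pose F j := ev a n (x - a * ((odflt 0 (pinv j))%:~R + 1) * δ)
   (v + a * δ) `&` G j.
have mG : forall j, measurable (G j) by move=> j; exact: mCyl.
have mF : forall j, measurable (F j) by move=> j; apply: measurableI; [exact: mev|].
have hn0 : (n < n0)%N by [].
have cover : ev a n.+1 x v `&` Cyl n0 B `<=` \bigcup_j F j.
  move=> w [hev hcyl].
  have [m hm] : exists m, m = Num.floor (Y n w / δ) by eexists.
  exists (pickle m) => //; split.
    move: hev; rewrite /ev pinvK /= !in_itv /Ssum big_nat_recr //=.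
    have := cellP' d0 hm; rewrite /cell pinvK /cellR /= in_itv.
    move=> /andP[c1 c2] /andP[h1 h2].
    have c1' : a * (m%:~R * δ) <= a * Y n w by rewrite ler_wpM2l.
    have c2' : a * Y n w <= a * ((m%:~R + 1) * δ) by rewrite ler_wpM2l // ltW.
    by rewrite mulrDr addrA in h1 h2; exact: arith_step c1' c2' h1 h2.
  move=> k hk; rewrite /Bj; case: eqP => [->|_]; last exact: hcyl.
  exact: cellP' d0 hm.
have h1 : (P (ev a n.+1 x v `&` Cyl n0 B) <= \sum_(j <oo) P (F j))%E.
  apply: measure_sigma_subadditive => //.
  by apply: measurableI; [exact: mev | exact: mCyl].
apply: (le_trans h1).
apply: (@le_trans _ _ (\sum_(j <oo) (eta%:E * P (G j)))%E).
  apply: lee_nneseries; first by move=> j _ _; exact: measure_ge0.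
  move=> j _; apply: IH => //.
  - exact: ltnW.
  - by move=> k hk; rewrite /Bj; case: eqP => [e|_]; [rewrite e ltnn in hk | apply: hB; lia].
  - move=> y; have := hW y.
    have -> : (v + a * δ + n%:R * a * δ) = (v + n.+1%:R * a * δ).
      by rewrite -natr1; ring.
    by [].
rewrite nneseriesZl; last by move=> j _; exact: measure_ge0.
rewrite -measure_semi_bigcup //; last first.
  - exact: bigcupT_measurable.
  - move=> i j _ _ [w [hi hj]].
    have := hi n hn0; have := hj n hn0; rewrite /Bj eqxx => c1 c2.
    exact: (cell_inj d0 c2 c1).
apply: lee_wpmul2l => //.
apply: le_measure; rewrite ?inE; [exact: bigcupT_measurable | exact: mCyl |].
move=> w [j _ hj] k hk; have := hj k hk; rewrite /Bj; case: eqP => [->|//].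
by rewrite hB.
Qed.

End Atomless.

Section AtomlessSum.
Context d (T : measurableType d) (R : realType) (P : probability T R)
  (X : {RV P >-> R}) (Y : nat -> {RV P >-> R}).
Hypothesis indep : independent_of_seq P X (fun k => (Y k : T -> R)).
Hypothesis atom : forall x, P (X @^-1` [set x]) = 0%E.

Lemma atomless_sum (a : R) n c : 0 <= a ->
  P [set w | X w + a * Ssum Y n w = c] = 0%E.
Proof.
move=> a0; apply/eqP; rewrite eq_le measure_ge0 andbT.
apply/lee_addgt0Pr => e e0; rewrite add0e.
have [w w0 hw] := mod_small atom e0.
pose K := n%:R * a.
have K0 : 0 <= K by rewrite /K mulr_ge0.
pose v := w / 2.
pose δ := w / (2 * (K + 1)).
have d0 : 0 < δ by rewrite /δ divr_gt0 // mulr_gt0 //; lra.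
have hK : K * δ <= w / 2.
  rewrite /δ mulrA ler_pdivrMr; last by rewrite mulr_gt0 //; lra.
  have -> : w / 2 * (2 * (K + 1)) = w * K + w by field.
  rewrite mulrC; lra.
have hW : forall y, (P (X @^-1` `]y, (y + (v + n%:R * a * δ))%R]) <= e%:E)%E.
  move=> y; apply: le_trans (hw y); apply: PX_le => //.
  move=> z /=; rewrite !in_itv /= => /andP[-> h2] /=.
  rewrite -/K /v in h2; lra.
have := @ind_bound _ _ _ P X Y indep a δ e n a0 d0 (ltW e0) n (leqnn n) v (c - v)
  (fun _ => setT) (fun _ => measurableT) (fun _ _ => erefl) hW.
move=> H.
have H2 : (P (ev X Y a n (c - v) v `&` Cyl Y n (fun _ => setT)) <= e%:E)%E.
  apply: le_trans H _.
  rewrite -[X in (_ <= X)%E]mule1; apply: lee_wpmul2l; first by rewrite lee_fin ltW.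
  by apply: probability_le1; apply: mCyl.
apply: le_trans H2.
apply: le_measure; rewrite ?inE.
- exact: (mpre (mZ X Y a n) (measurable_set1 c)).
- by apply: measurableI; [exact: mev | exact: mCyl].
move=> z /= hz; split.
  rewrite /ev /= in_itv /= hz.
  have w2 : 0 < v by rewrite /v; lra.
  by apply/andP; split; lra.
by move=> k _.
Qed.

End AtomlessSum.

Lemma down_meas (R : realType) (D : set R) :
  (forall x y, x <= y -> D y -> D x) -> measurable D.
Proof.
move=> Dd.
case: (pselect (exists y, ~ D y)) => [[y0 hy0]|hall]; last first.
  have -> : D = setT.
    by apply/seteqP; split => x // _; apply: contrapT => hx; apply: hall; exists x.
  exact: measurableT.
have ub : forall x, D x -> x < y0.
  by move=> x hx; rewrite ltNge; apply/negP => hle; apply: hy0; exact: Dd hx.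
case: (pselect (D !=set0)) => [ne|emp]; last first.
  have -> : D = set0.
    by apply/seteqP; split => x // hx; apply: emp; exists x.
  exact: measurable0.
have hs : has_sup D by split => //; exists y0 => x /ub/ltW.
case: (pselect (D (sup D))) => hDs.
  have -> : D = `]-oo, sup D]%classic.
    apply/seteqP; split => x /=; rewrite in_itv /=.
      by move=> hx; apply: (ub_le_sup hs.2).
    by move=> hx; exact: Dd hDs.
  exact: measurable_itv.
have -> : D = `]-oo, sup D[%classic.
  apply/seteqP; split => x /=; rewrite in_itv /=.
    move=> hx; rewrite lt_neqAle (ub_le_sup hs.2) // andbT.
    by apply/eqP => e; apply: hDs; rewrite -e.
  move=> hx; have sx : 0 < sup D - x by rewrite subr_gt0.
  have [e he hlt] := sup_adherent sx hs.
  by apply: Dd he; lra.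
exact: measurable_itv.
Qed.

Lemma hit_le d (T : measurableType d) (R : realType) (X : R -> T -> R) w s t :
  0 <= s -> X s w <= 0 -> s <= t -> (hit_time X w <= t%:E)%E.
Proof.
move=> s0 hX st; apply: ge_ereal_inf; exists s%:E; last by rewrite lee_fin.
by exists s.
Qed.

Lemma hit_time_ext d (T : measurableType d) (R : realType) (X X' : R -> T -> R) w :
  (forall s, 0 <= s -> X s w = X' s w) -> hit_time X w = hit_time X' w.
Proof.
move=> H; rewrite /hit_time; congr ereal_inf.
apply/seteqP; split => _ [s [s0 hs] <-]; exists s => //; split => //.
  by rewrite -H.
by rewrite H.
Qed.

Section Main.
Context d (T : measurableType d) (R : realType) (P : probability T R)
  (alpha h : R) (Y : nat -> {RV P >-> R}) (X0 : {RV P >-> R}).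
Hypothesis ha : 0 < alpha.
Hypothesis hh : 0 < h.
Hypothesis indep : independent_of_seq P X0 (fun k => (Y k : T -> R)).
Hypothesis atom : atomless_law P X0.

Local Notation Yf := (fun k => (Y k : T -> R)).
Local Notation Gam := (Gamma_h P alpha h (fun k => (Y k : T -> R)) X0).

Definition NN (t : R) : nat := Num.truncn (t / h).
Definition Zj j (w : T) : R := X0 w + Num.sqrt h * Ssum Y j.+1 w.

Lemma BhE s w : X0 w + Bh h Yf s w = Zj (NN s) w.
Proof. by []. Qed.

Lemma NN_jh j : NN (h * j%:R) = j.
Proof. by rewrite /NN mulrC mulKf ?gt_eqF // natrK. Qed.

Lemma NN_le j t : 0 <= t -> (j <= NN t)%N = (h * j%:R <= t).
Proof.
move=> t0; rewrite /NN truncn_ge_nat; last by rewrite divr_ge0 // ltW.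

by rewrite ler_pdivlMr // mulrC.
Qed.

Lemma NN_gt t : 0 <= t -> t < h * (NN t).+1%:R.
Proof. by move=> t0; have := truncnS_gt (t / h); rewrite ltr_pdivrMr // mulrC. Qed.

Lemma floorNN s : 0 <= s -> h * (Num.floor (s / h))%:~R = h * (NN s)%:R.
Proof.
move=> s0; congr (_ * _); rewrite /NN truncEfloor.
have : 0 <= Num.floor (s / h) by rewrite floor_ge0 divr_ge0 // ltW.
by case: (Num.floor _).
Qed.

Lemma Zj_atom j c : P [set w | Zj j w = c] = 0%E.
Proof. by rewrite /Zj; apply: (atomless_sum indep atom); exact: sqrtr_ge0. Qed.

Lemma mZj j : measurable_fun setT (Zj j).
Proof. exact: mZ. Qed.

Definition XG (l : R -> R) s w :=
  X0 w + Bh h Yf s w - alpha * l (h * (Num.floor (s / h))%:~R).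

Definition E (l : R -> R) t :=
  [set w | exists2 j, (j <= NN t)%N & Zj j w <= alpha * l (h * j%:R)].

Lemma hitG l t w : 0 <= t -> (hit_time (XG l) w <= t%:E)%E <-> E l t w.
Proof.
move=> t0; split; last first.
  case=> j hj hz; apply: (@hit_le _ _ _ _ w (h * j%:R)).
  - by rewrite mulr_ge0 // ltW.
  - rewrite /XG floorNN; last by rewrite mulr_ge0 // ltW.
    by rewrite NN_jh BhE NN_jh subr_le0.
  - by rewrite -NN_le.
move=> hle; apply: contrapT => hE.
have hlb : ((h * (NN t).+1%:R)%:E <= hit_time (XG l) w)%E.
  apply/ereal_infP => _ [s [s0 hs] <-]; rewrite lee_fin.
  move: hs; rewrite /XG floorNN // BhE subr_le0 => hs.
  have : ~ (NN s <= NN t)%N by move=> hn; apply: hE; exists (NN s).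
  move/negP; rewrite -ltnNge => hlt.
  have h2 : h * (NN s)%:R <= s by rewrite -NN_le.
  apply: le_trans h2; rewrite ler_pM2l // ler_nat //.
have := le_trans hlb hle; rewrite lee_fin.
by have := NN_gt t0; lra.
Qed.

Lemma mE l t : measurable (E l t).
Proof.
have -> : E l t = \bigcup_j (if (j <= NN t)%N then
    Zj j @^-1` `]-oo, alpha * l (h * j%:R)] else set0).
  apply/seteqP; split => w.
    by case=> j hj hz; exists j => //; rewrite hj /= in_itv /=.
  by case=> j _; case: ifP => // hj; rewrite /= in_itv /= => hz; exists j.
apply: bigcupT_measurable => j; case: ifP => _; last exact: measurable0.
by apply: mpre; [exact: mZj | exact: measurable_itv].
Qed.

Lemma GammaE l t : 0 <= t -> Gam l t = fine (P (E l t)).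
Proof.
move=> t0; rewrite /Gamma_h /hit_cdf; congr (fine (P _)).
by apply/seteqP; split => w /=; move/(hitG l w t0).
Qed.

Lemma Gam_ge0 l t : 0 <= Gam l t.
Proof. by rewrite /Gamma_h /hit_cdf; apply: fine_ge0; exact: measure_ge0. Qed.

Lemma finE l t : P (E l t) \is a fin_num.
Proof. exact: (fin_num_measure P _ (mE l t)). Qed.

Lemma Gam_le1 l t : 0 <= t -> Gam l t <= 1.
Proof.
move=> t0; rewrite GammaE // -lee_fin fineK; last exact: finE.
exact: probability_le1 (mE l t).
Qed.

Lemma Gam_mono l l' t : 0 <= t ->
  (forall j, (j <= NN t)%N -> l (h * j%:R) <= l' (h * j%:R)) ->
  Gam l t <= Gam l' t.
Proof.
move=> t0 hl; rewrite !GammaE //; apply: fine_le; try exact: finE.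
apply: le_measure; rewrite ?inE; try exact: mE.
move=> w [j hj hz]; exists j => //; apply: le_trans hz _.
by rewrite ler_pM2l //; exact: hl.
Qed.

Lemma Gam_step l t : 0 <= t -> Gam l t = Gam l (h * (NN t)%:R).
Proof.
move=> t0; rewrite !GammaE //; last by rewrite mulr_ge0 // ltW.
by rewrite /E NN_jh.
Qed.

Local Notation G k := (iter k Gam (fun _ : R => 0)).

Lemma G_ge0 k t : 0 <= G k t.
Proof. by case: k => [|k] //=; exact: Gam_ge0. Qed.

Lemma G_le1 k t : 0 <= t -> G k t <= 1.
Proof. by case: k => [|k] t0 /=; [exact: ler01 | exact: Gam_le1]. Qed.

Lemma G_incr k t : 0 <= t -> G k t <= G k.+1 t.
Proof.
elim: k t => [|k IH] t t0; first exact: Gam_ge0.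
apply: Gam_mono => // j _; apply: IH; apply: mulr_ge0 => //; exact: ltW.
Qed.

Lemma G_step k t : 0 <= t -> G k t = G k (h * (NN t)%:R).
Proof. by case: k => [|k] t0 //=; exact: Gam_step. Qed.

Definition Gl t := sup (range (fun k => G k t)).

Lemma G_ub t : 0 <= t -> has_ubound (range (fun k => G k t)).
Proof. by move=> t0; exists 1 => _ [k _ <-]; exact: G_le1. Qed.

Lemma G_cvg t : 0 <= t -> (fun k => G k t) @ \oo --> Gl t.
Proof.
move=> t0; apply: nondecreasing_cvgn; last exact: G_ub.
by apply/nondecreasing_seqP => k; exact: G_incr.
Qed.

Lemma G_le_Gl k t : 0 <= t -> G k t <= Gl t.
Proof. by move=> t0; apply: (ub_le_sup (G_ub t0)); exists k. Qed.

Lemma Gl_step t : 0 <= t -> Gl t = Gl (h * (NN t)%:R).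
Proof.
move=> t0; rewrite /Gl.
rewrite (_ : (fun k => G k t) = (fun k => G k (h * (NN t)%:R))) //.
by apply: funext => k; exact: G_step.
Qed.

Variable Lam : R -> R.
Hypothesis hsol : donsker_solution P alpha h Yf X0 Lam.

Definition XL s w := X0 w + Bh h Yf s w - Lam s.
Definition A t := [set w | (hit_time XL w <= t%:E)%E].

Lemma LamE t : 0 <= t -> Lam t / alpha = fine (P (A t)).
Proof. by move=> t0; rewrite (hsol t0) mulrC mulKf ?gt_eqF. Qed.

Lemma mA t : measurable (A t).
Proof.
pose D q j := [set x : R | exists s, [/\ 0 <= s, s <= t + wq R q, NN s = j & x <= Lam s]].
have -> : A t = \bigcap_q \bigcup_j (Zj j @^-1` D q j).
  apply/seteqP; split => w.
    move=> hle q _.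
    have : (hit_time XL w < (t + wq R q)%:E)%E.
      by apply: le_lt_trans hle _; rewrite lte_fin ltrDl (wq_gt0 R q).
    case/ereal_inf_lt => _ [s [s0 hs] <-]; rewrite lte_fin => hst.
    exists (NN s) => //; exists s; split => //; first exact: ltW.
    by move: hs; rewrite /XL BhE subr_le0.
  move=> H; rewrite /A /=; apply/lee_addgt0Pr => e e0.
  have [j _ [s [s0 hst hj hz]]] := H (Num.truncn e^-1) I.
  apply: (@hit_le _ _ _ _ w s) => //.
    by rewrite /XL BhE hj subr_le0.
  by have := wq_small e0; lra.
apply: bigcapT_measurable => q; apply: bigcupT_measurable => j.
apply: mpre; first exact: mZj.
apply: down_meas => x y xy [s [s0 hs hj hy]]; exists s; split => //.
exact: le_trans hy.
Qed.

Lemma finA t : P (A t) \is a fin_num.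
Proof. exact: (fin_num_measure P _ (mA t)). Qed.

Lemma G_le_Lam k t : 0 <= t -> G k t <= Lam t / alpha.
Proof.
elim: k t => [|k IH] t t0.
  by rewrite LamE //; apply: fine_ge0; exact: measure_ge0.
rewrite /= GammaE // LamE //; apply: fine_le; [exact: finE | exact: finA |].
apply: le_measure; rewrite ?inE; [exact: mE | exact: mA |].
move=> w [j hj hz].
have hj0 : 0 <= h * j%:R by apply: mulr_ge0 => //; exact: ltW.
have hG := IH _ hj0.
apply: (@hit_le _ _ _ XL w (h * j%:R)); [exact: hj0 | | by rewrite -NN_le].
rewrite /XL BhE NN_jh subr_le0; apply: le_trans hz _.
by rewrite -ler_pdivlMl // [_^-1 * _]mulrC.
Qed.

Lemma Gl_fix t : 0 <= t -> Gam Gl t = Gl t.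
Proof.
move=> t0; rewrite GammaE //.
pose U := \bigcup_k E (G k) t.
have mU : measurable U by apply: bigcupT_measurable => k; exact: mE.
have Einc : {homo (fun k => E (G k) t) : n m / (n <= m)%N >-> (n <= m)%O}.
  apply/nondecreasing_seqP => k; apply/subsetPset => w [j hj hz].
  exists j => //; apply: le_trans hz _; rewrite ler_pM2l //.
  by apply: G_incr; apply: mulr_ge0 => //; exact: ltW.
have cvU := nondecreasing_cvg_mu (fun k => mE (G k) t) mU Einc.
have hUE : U `<=` E Gl t.
  move=> w [k _ [j hj hz]]; exists j => //; apply: le_trans hz _.
  rewrite ler_pM2l //; apply: G_le_Gl; apply: mulr_ge0 => //; exact: ltW.
pose Bad := \bigcup_j [set w | Zj j w = alpha * Gl (h * j%:R)].
have mBadj : forall j, measurable [set w | Zj j w = alpha * Gl (h * j%:R)].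
  by move=> j; exact: (mpre (mZj j) (measurable_set1 _)).
have mBad : measurable Bad by exact: bigcupT_measurable.
have PBad : P Bad = 0%E.
  apply/eqP; rewrite eq_le measure_ge0 andbT.
  have hs := @measure_sigma_subadditive _ _ _ P Bad _ mBadj mBad (fun w hw => hw).
  apply: le_trans hs _.
  by rewrite eseries0 // => j _ _; exact: Zj_atom.
have hEU : E Gl t `<=` U `|` Bad.
  move=> w [j hj hz].
  case: (eqVneq (Zj j w) (alpha * Gl (h * j%:R))) => [e|ne]; first by right; exists j.
  left.
  have hj0 : 0 <= h * j%:R by apply: mulr_ge0 => //; exact: ltW.
  have hlt : Zj j w / alpha < Gl (h * j%:R).
    by rewrite ltr_pdivrMr // mulrC lt_neqAle ne hz.
  have eps : 0 < Gl (h * j%:R) - Zj j w / alpha by rewrite subr_gt0.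
  have [_ [k _ <-] hk] := sup_adherent eps (conj (ex_intro _ (G 0 (h * j%:R)) (ex_intro2 _ _ 0%N I erefl)) (G_ub hj0)).
  exists k => //; exists j => //.
  rewrite -ler_pdivrMl // mulrC; apply: ltW.
  by move: hk; rewrite /Gl; lra.
have PE : P (E Gl t) = P U.
  apply/eqP; rewrite eq_le; apply/andP; split; last first.
    by apply: le_measure; rewrite ?inE //; exact: mE.
  apply: (@le_trans _ _ (P (U `|` Bad))).
    by apply: le_measure; rewrite ?inE //; [exact: mE | exact: measurableU].
  apply: le_trans (measureU2 _ mU mBad) _.
  by rewrite [X in (_ + X <= _)%E](_ : _ = 0%E) ?adde0 //; exact: PBad.
rewrite PE.
have finU : P U \is a fin_num by exact: fin_num_measure.
have c1 : (fun k => G k.+1 t) @ \oo --> fine (P U).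
  have : (fine \o (P \o (fun k => E (G k) t))) k @[k --> \oo] --> fine (P U).
    have cv2 : (P \o (fun k => E (G k) t)) k @[k --> \oo] --> (fine (P U))%:E by rewrite fineK //; exact: cvU.
    exact: fine_cvg cv2.
  apply: cvg_trans; apply: near_eq_cvg; near=> k => /=.
  by rewrite GammaE.
have c2 : (fun k => G k.+1 t) @ \oo --> Gl t.
  by have := G_cvg t0; rewrite -cvg_shiftS.
exact: (cvg_unique _ c1 c2).
Unshelve. all: by end_near.
Qed.

Lemma Gl_sol : donsker_solution P alpha h Yf X0 (fun s => alpha * Gl s).
Proof.
move=> t t0; congr (alpha * _).
rewrite -{1}(Gl_fix t0) /Gamma_h /hit_cdf; congr (fine (P _)).
apply: funext => w /=; congr (_ <= _)%E.
apply: hit_time_ext => s s0.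
by rewrite floorNN // -Gl_step.
Qed.

Lemma main_conv :
  (forall Lam', donsker_solution P alpha h Yf X0 Lam' ->
    forall t, 0 <= t -> Lam t <= Lam' t) ->
  forall t, 0 <= t -> (fun k => G k t) @ \oo --> Lam t / alpha.
Proof.
move=> hmin t t0.
have hGl : Gl t = Lam t / alpha.
  apply/eqP; rewrite eq_le; apply/andP; split.
    apply: ge_sup; first by exists (G 0 t), 0%N.
    by move=> _ [k _ <-]; exact: G_le_Lam.
  have := hmin _ Gl_sol t t0.
  by rewrite ler_pdivrMr // mulrC.
rewrite -hGl; exact: G_cvg.
Qed.

End Main.

Unset Implicit Arguments.

Theorem lemma3p1 (d : measure_display) (T : measurableType d) (R : realType)
  (P : probability T R) (alpha h : R)
  (Y : nat -> {RV P >-> R}) (X0 : {RV P >-> R}) (Lam : R -> R) :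
  0 < alpha -> 0 < h ->
  mutually_independent_seq P (fun k => (Y k : T -> R)) ->
  identically_distributed_seq P (fun k => (Y k : T -> R)) ->
  P.-integrable setT (EFin \o (Y 1%N : T -> R)) ->
  ('E_P[Y 1%N] = 0)%E ->
  ('E_P[(Y 1%N : T -> R) ^+ 2] = 1)%E ->
  independent_of_seq P X0 (fun k => (Y k : T -> R)) ->
  atomless_law P X0 ->
  donsker_minimal_solution P alpha h (fun k => (Y k : T -> R)) X0 Lam ->
  forall t : R, 0 <= t ->
    {for t, continuous (extM (fun s => Lam s / alpha))} ->
    (fun k : nat =>
       iter k (Gamma_h P alpha h (fun k => (Y k : T -> R)) X0)
              (fun _ : R => 0) t)
      @ \oo --> Lam t / alpha.
Proof.
move=> ha hh _ _ _ _ _ indep atom [hsol hmin] t t0 _.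
exact: (main_conv ha hh indep atom hsol hmin t0).
Qed.
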